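(* Let $\mathcal{C}\subseteq\mathbb{F}_q^n$ be a linear code of length $n$ with covering radius $\rho$, and let $j$ be a positive integer with $j\le\rho$. Define $$\mathcal{Y}_j=\{\mathbf{y}\in\mathbb{F}_q^n : d(\mathbf{y},\mathcal{C})\ge\rho-j\},$$ $$\mathcal{E}_j=\{\mathbf{y}-\mathbf{c} : \mathbf{y}\in\mathcal{Y}_j,\ \mathbf{c}\in\mathcal{C},\ d(\mathbf{y},\mathbf{c})=d(\mathbf{y},\mathcal{C})\},$$ $$P_j=\bigcap_{\mathbf{e}\in\mathcal{E}_j}\mathrm{supp}(\mathbf{e}).$$ Let $\mathcal{C}_j'\subseteq\mathbb{F}_q^{n-|P_j|}$ be the code obtained by puncturing $\mathcal{C}$ at the positions of $P_j$. Then the covering radius $\rho_j'$ of $\mathcal{C}_j'$ satisfies $$\rho_j'\le\max\{\rho-j-1,\ \rho-|P_j|\}.$$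
   Context: $d$ denotes the Hamming distance and $d(\mathbf{y},\mathcal{C})=\min_{\mathbf{c}\in\mathcal{C}}d(\mathbf{y},\mathbf{c})$. The covering radius of a code $\mathcal{C}\subseteq\mathbb{F}_q^N$ is $\max_{\mathbf{y}\in\mathbb{F}_q^N}d(\mathbf{y},\mathcal{C})$. $\mathrm{supp}(\mathbf{e})$ is the set of coordinates where $\mathbf{e}$ is nonzero. Puncturing $\mathcal{C}$ at a set of positions $P$ means deleting the coordinates indexed by $P$ from every codeword, giving the code $\pi_{\{1,\dots,n\}\setminus P}(\mathcal{C})\subseteq\mathbb{F}_q^{n-|P|}$. *)

(* Defs.v *)
From HB Require Import structures.
From mathcomp Require Import all_boot all_order all_algebra.
Set Implicit Arguments. Unset Strict Implicit. Unset Printing Implicit Defensive.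
Import Order.TTheory GRing.Theory Num.Theory.

Definition ham (F : finFieldType) (m : nat) (x y : 'rV[F]_m) : nat :=
  #|[set i : 'I_m | x ord0 i != y ord0 i]|.

(* d(y, C) = min_{c in C} d(y, c) for a code C given as a set of words
   (default value m, the length, if C is empty). *)
Definition dist_code (F : finFieldType) (m : nat) (C : {set 'rV[F]_m})
  (y : 'rV[F]_m) : nat :=
  \big[minn/m]_(c in C) ham y c.

Definition covrad (F : finFieldType) (m : nat) (C : {set 'rV[F]_m}) : nat :=
  \max_(y : 'rV[F]_m) dist_code C y.

Definition supp (F : finFieldType) (m : nat) (e : 'rV[F]_m) : {set 'I_m} :=
  [set i | e ord0 i != 0%R].

Definition codewords (F : finFieldType) (n : nat) (C : {vspace 'rV[F]_n})
  : {set 'rV[F]_n} := [set c | c \in C].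

(* Projection onto the coordinates outside P (kept in increasing order),
   i.e. deletion of the coordinates in P. *)
Definition proj_out (F : finFieldType) (n : nat) (P : {set 'I_n})
  (y : 'rV[F]_n) : 'rV[F]_#|~: P| :=
  \row_(k < #|~: P|) y ord0 (enum_val k).

(* Puncturing C at P: a code in F^(n - |P|) (note #|~: P| = n - #|P|). *)
Definition puncture (F : finFieldType) (n : nat) (C : {set 'rV[F]_n})
  (P : {set 'I_n}) : {set 'rV[F]_#|~: P|} :=
  [set proj_out P c | c in C].

Definition Yset (F : finFieldType) (n : nat) (C : {set 'rV[F]_n}) (j : nat)
  : {set 'rV[F]_n} :=
  [set y | covrad C - j <= dist_code C y].

Definition Eset (F : finFieldType) (n : nat) (C : {set 'rV[F]_n}) (j : nat)
  : {set 'rV[F]_n} :=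
  [set e | [exists y in Yset C j, exists c in C,
             (ham y c == dist_code C y) && (e == y - c)%R]].

Definition Pset (F : finFieldType) (n : nat) (C : {set 'rV[F]_n}) (j : nat)
  : {set 'I_n} :=
  \bigcap_(e in Eset C j) supp e.

(* Main.v *)
Require Import Defs.
From HB Require Import structures.
From mathcomp Require Import all_boot all_order all_algebra.
From mathcomp Require Import zify.
Import Order.TTheory GRing.Theory Num.Theory.

Section H.
Variables (F : finFieldType) (n : nat).

Lemma ham_le (m : nat) (x y : 'rV[F]_m) : (ham x y <= m)%N.
Proof. by rewrite /ham (leq_trans (max_card _)) // card_ord. Qed.

Lemma dist_le (C : {set 'rV[F]_n}) y c : c \in C -> (dist_code C y <= ham y c)%N.
Proof.
move=> hc; rewrite /dist_code -big_filter.
have : c \in [seq i <- index_enum _ | i \in C] by rewrite mem_filter hc mem_index_enum.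
elim: [seq i <- _ | _] => [//|a s IH]; rewrite in_cons big_cons.
case/orP => [/eqP -> | /IH h]; first by rewrite geq_minl.
by rewrite (leq_trans (geq_minr _ _)).
Qed.

Lemma dist_ex (C : {set 'rV[F]_n}) y c0 : c0 \in C ->
  exists2 c, c \in C & dist_code C y = ham y c.
Proof.
move=> h0.
have : (dist_code C y == n) || [exists c in C, dist_code C y == ham y c].
  rewrite /dist_code; apply: (big_ind (fun x => (x == n) || [exists c in C, x == ham y c])).
  - by rewrite eqxx.
  - move=> a b ha hb; rewrite /minn; by case: ltnP.
  - by move=> c hc; apply/orP; right; apply/existsP; exists c; rewrite hc eqxx.
case/orP => [/eqP hn | /existsP [c /andP [hc /eqP e]]]; last by exists c.
exists c0 => //; apply/eqP; rewrite eqn_leq dist_le //= hn ham_le.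
by [].
Qed.

Lemma ham_proj (P : {set 'I_n}) (y c : 'rV[F]_n) :
  ham (proj_out P y) (proj_out P c) = #|[set i | y ord0 i != c ord0 i] :&: ~: P|.
Proof.
rewrite /ham -(card_imset _ enum_val_inj); apply: eq_card => i.
Show.
rewrite in_setI in_set; case: (boolP (i \in ~: P)) => hi.
- rewrite andbT; apply/imsetP/idP.
  + by case=> k; rewrite in_set !mxE => hk ->.
  + move=> hne; exists (enum_rank_in hi i); last by rewrite enum_rankK_in.
    by rewrite in_set !mxE enum_rankK_in.
- rewrite andbF; apply/imsetP => -[k _ e]; move: hi; by rewrite e enum_valP.
Qed.

Lemma ham_split (P : {set 'I_n}) (y c : 'rV[F]_n) :
  ham y c = (ham (proj_out P y) (proj_out P c) + #|[set i | y ord0 i != c ord0 i] :&: P|)%N.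
Proof. by rewrite ham_proj /ham -(cardsID (~: P)) setDE setCK. Qed.

Definition ext (P : {set 'I_n}) (z : 'rV[F]_#|~: P|) : 'rV[F]_n :=
  \row_i (if [pick k | enum_val k == i] is Some k then z ord0 k else 0%R).

Lemma proj_ext (P : {set 'I_n}) (z : 'rV[F]_#|~: P|) : proj_out P (ext P z) = z.
Proof.
apply/rowP => k; rewrite !mxE.
case: pickP => [k' /eqP /enum_val_inj -> // | /(_ k)]; by rewrite eqxx.
Qed.

End H.
Arguments ham_le {F m}.
Arguments dist_le {F n}.
Arguments dist_ex {F n}.
Arguments ham_proj {F n}.
Arguments ham_split {F n}.
Arguments proj_ext {F n}.

Lemma key (F : finFieldType) (n : nat) (C : {vspace 'rV[F]_n}) (j : nat)
  (z : 'rV[F]_#|~: Pset (codewords C) j|) :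
  let rho := covrad (codewords C) in
  let P := Pset (codewords C) j in
  (dist_code (puncture (codewords C) P) z + j + 1 <= rho)%N
  || (dist_code (puncture (codewords C) P) z + #|P| <= rho)%N.
Proof.
cbv zeta; set rho := covrad (codewords C); set P := Pset (codewords C) j.
set Cw := codewords C.
have c0 : (0 : 'rV[F]_n)%R \in Cw by rewrite in_set mem0v.
set y := @ext F n P z.
have [c hc hd] := dist_ex _ y _ c0.
have hdr : (dist_code Cw y <= rho)%N by rewrite /rho /covrad; apply: (@leq_bigmax _ (fun y => dist_code Cw y)).
have hz : (dist_code (puncture Cw P) z <= ham (proj_out P y) (proj_out P c))%N.
  by rewrite proj_ext; apply: dist_le; apply: imset_f.
case: (leqP (rho - j) (dist_code Cw y)) => hcase.
- apply/orP; right.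
  have hY : y \in Yset Cw j by rewrite in_set.
  have hE : (y - c)%R \in Eset Cw j.
    rewrite in_set; apply/existsP; exists y; rewrite hY /=.
    by apply/existsP; exists c; rewrite hc hd !eqxx.
  have hsub : P \subset supp (y - c)%R by apply: (bigcap_inf (y - c)%R hE).
  have hPS : P \subset [set i | y ord0 i != c ord0 i].
    apply/subsetP => i /(subsetP hsub); rewrite !in_set !mxE.
    by rewrite subr_eq0.
  move: (ham_split P y c); rewrite (setIidPr hPS) -hd => e.
  by rewrite (leq_trans _ hdr) // e leq_add2r.
- apply/orP; left.
  have : (dist_code (puncture Cw P) z <= dist_code Cw y)%N.
    by rewrite (leq_trans hz) // hd (ham_split P y c) leq_addr.
  lia.
Qed.

Local Open Scope ring_scope.

Theorem proposition2 (F : finFieldType) (n : nat) (C : {vspace 'rV[F]_n})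
  (j : nat) (hj0 : (0 < j)%N) (hjrho : (j <= covrad (codewords C))%N) :
  let rho := covrad (codewords C) in
  let P := Pset (codewords C) j in
  ((covrad (puncture (codewords C) P))%:Z : int)
    <= Num.max (rho%:Z - j%:Z - 1) (rho%:Z - (#|P|)%:Z).
Proof.
cbv zeta.
rewrite {1}/covrad (bigop.bigmax_eq_arg 0%R) //.
set z := [arg max_(i > 0 | _) _].
have h := key F n C j z; cbv zeta in h.
rewrite le_max; case/orP: h => h; apply/orP; [left|right]; lia.
Qed.
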